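(* Consider the two-layer multi-item order fulfillment problem described in the context with a single FDC ($K=1$). Let an algorithm produce a feasible plan $\{m_{k,t}^i\}$ with FDC inventories $I_{1,t}^i=I_{1,0}^i-\sum_{\tau\le t}m_{1,\tau}^i$, and let $\hat m_{1,t}^i=\min\{S_t^i,I_{1,t-1}^i\}$. Suppose that for every $i$ and $t$, either $m_{1,t}^i=\hat m_{1,t}^i$ or $m_{1,t}^i=0$. Let $\{m_{k,t}^{i,*}\}$ be an optimal offline plan. Fix an item $i$ and let $C_i=\{t:m_{1,t}^i>0\}$. Then for every set $B\subseteq[T]$ with $B\supseteq C_i$, \[\sum_{t\in B}\hat m_{1,t}^i\ \ge\ \sum_{t\in B}m_{1,t}^{i,*}.\]
   Context: Problem with one FDC (index $1$) and one RDC (index $0$, unlimited inventory). The FDC initially holds $I_{1,0}^i\ge0$ units of item $i\in[n]$, never replenished. In periods $t=1,\dots,T$ an order $\boldsymbol S_t=(S_t^i)_i$ of nonnegative integers arrives with variable costs $c_{k,t}^i$; a feasible plan chooses $m_{0,t}^i,m_{1,t}^i\ge0$ with $m_{0,t}^i+m_{1,t}^i=S_t^i$ and $\sum_{\tau\le t}m_{1,\tau}^i\le I_{1,0}^i$. The period cost is $\sum_{k=0,1}[f_k\mathbb{I}(\sum_im_{k,t}^i>0)+\sum_ic_{k,t}^im_{k,t}^i]$; an optimal offline plan minimizes total cost over all feasible plans with full knowledge of the instance. *)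

(* Defs.v *)
From mathcomp Require Import all_boot all_order all_algebra.
Set Implicit Arguments. Unset Strict Implicit. Unset Printing Implicit Defensive.
Import Order.TTheory GRing.Theory Num.Theory.

(* Conventions: items are 'I_n; periods are the natural numbers t with
   1 <= t <= T.  A plan is a pair of functions m0 m1 : nat -> 'I_n -> nat
   (m_{0,t}^i and m_{1,t}^i); only their values at periods 1..T matter.
   Index 0 is the RDC, index 1 is the (single) FDC. *)

Definition fdc_inv (n : nat) (I0 : 'I_n -> nat) (m1 : nat -> 'I_n -> nat)
  (t : nat) (i : 'I_n) : nat :=
  I0 i - \sum_(1 <= tau < t.+1) m1 tau i.

(* Feasibility of a plan. Nonnegativity and integrality are built into nat. *)
Definition feasible (n T : nat) (I0 : 'I_n -> nat) (S : nat -> 'I_n -> nat)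
  (m0 m1 : nat -> 'I_n -> nat) : Prop :=
  (forall t i, 1 <= t <= T -> m0 t i + m1 t i = S t i) /\
  (forall t i, 1 <= t <= T -> \sum_(1 <= tau < t.+1) m1 tau i <= I0 i).

Definition period_cost (R : numDomainType) (n : nat) (f0 f1 : R)
  (c0 c1 : nat -> 'I_n -> R) (m0 m1 : nat -> 'I_n -> nat) (t : nat) : R :=
  ((if (0 < \sum_(i < n) m0 t i)%N then f0 else 0)
     + \sum_(i < n) c0 t i * (m0 t i)%:R
   + ((if (0 < \sum_(i < n) m1 t i)%N then f1 else 0)
     + \sum_(i < n) c1 t i * (m1 t i)%:R))%R.

Definition total_cost (R : numDomainType) (n T : nat) (f0 f1 : R)
  (c0 c1 : nat -> 'I_n -> R) (m0 m1 : nat -> 'I_n -> nat) : R :=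
  (\sum_(1 <= t < T.+1) period_cost f0 f1 c0 c1 m0 m1 t)%R.

Definition optimal_plan (R : numDomainType) (n T : nat) (I0 : 'I_n -> nat)
  (S : nat -> 'I_n -> nat) (f0 f1 : R) (c0 c1 : nat -> 'I_n -> R)
  (m0 m1 : nat -> 'I_n -> nat) : Prop :=
  feasible T I0 S m0 m1 /\
  forall m0' m1', feasible T I0 S m0' m1' ->
    (total_cost T f0 f1 c0 c1 m0 m1 <= total_cost T f0 f1 c0 c1 m0' m1')%R.

Definition mhat (n : nat) (I0 : 'I_n -> nat) (S : nat -> 'I_n -> nat)
  (m1 : nat -> 'I_n -> nat) (t : nat) (i : 'I_n) : nat :=
  minn (S t i) (fdc_inv I0 m1 t.-1 i).

(* Main.v *)
Require Import Defs.
From mathcomp Require Import all_boot all_order all_algebra.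
From mathcomp Require Import zify.

Theorem mainTheorem13 (R : realFieldType) (n T : nat) (I0 : 'I_n -> nat)
  (Sd : nat -> 'I_n -> nat) (f0 f1 : R) (c0 c1 : nat -> 'I_n -> R)
  (m0 m1 : nat -> 'I_n -> nat)
  (Hfeas : feasible T I0 Sd m0 m1)
  (Hdich : forall (i : 'I_n) (t : nat), 1 <= t <= T ->
     m1 t i = mhat I0 Sd m1 t i \/ m1 t i = 0)
  (ms0 ms1 : nat -> 'I_n -> nat)
  (Hopt : optimal_plan T I0 Sd f0 f1 c0 c1 ms0 ms1)
  (i : 'I_n) (B : pred nat)
  (HB : forall t, B t -> 1 <= t <= T)
  (HCB : forall t, 1 <= t <= T -> 0 < m1 t i -> B t) :
  \sum_(1 <= t < T.+1 | B t) ms1 t i <= \sum_(1 <= t < T.+1 | B t) mhat I0 Sd m1 t i.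
Proof.
case: Hopt => [[Hs1 Hs2] _]. case: Hfeas => [_ Hf2].
rewrite (big_mkcond B) [X in _ <= X](big_mkcond B) /=.
have Hm1 : forall k, k <= T ->
  \sum_(1 <= t < k.+1) m1 t i <=
  \sum_(1 <= t < k.+1) (if B t then mhat I0 Sd m1 t i else 0).
  move=> k kT; rewrite big_nat [X in _ <= X]big_nat; apply: leq_sum => t /andP [t1 tk].
  have tT : 1 <= t <= T by apply/andP; split => //; exact: leq_trans (tk : t <= k) kT.
  case: (Hdich i t tT) => [E|->] //.
  case: (posnP (m1 t i)) => [->|P] //.
  by rewrite (HCB t tT P) -E.
have Hinv : forall k, k <= T -> I0 i = fdc_inv I0 m1 k i + \sum_(1 <= t < k.+1) m1 t i.
  move=> k kT; rewrite /fdc_inv subnK //.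
  case: k kT => [|k] kT; first by rewrite big_geq.
  by apply: Hf2.
suff: forall k, k <= T ->
  \sum_(1 <= t < k.+1) (if B t then ms1 t i else 0) <=
  \sum_(1 <= t < k.+1) (if B t then mhat I0 Sd m1 t i else 0) by apply.
elim => [|k IH] kT; first by rewrite !big_geq.
rewrite !(big_nat_recr k.+1 1) //=.
case Bk: (B k.+1); last by rewrite !addn0 IH // ltnW.
have kT' : 1 <= k.+1 <= T by apply/andP; split => //.
rewrite /mhat; change (k.+1.-1) with k.
case: (leqP (Sd k.+1 i) (fdc_inv I0 m1 k i)) => H.
   apply: leq_add; first by apply: IH; exact: ltnW.
  by rewrite -(Hs1 k.+1 i kT') leq_addl.
apply: (@leq_trans (\sum_(1 <= t < k.+2) ms1 t i)).
  rewrite (big_nat_recr k.+1 1) //=; apply: leq_add => //.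
  by rewrite big_nat [X in _ <= X]big_nat; apply: leq_sum => t _; case: (B t).
apply: (leq_trans (Hs2 k.+1 i kT')).
rewrite (Hinv k (ltnW kT)) addnC.
by rewrite leq_add2r; apply: Hm1; exact: ltnW.
Qed.
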